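(* Under the assumptions of the preceding theorem (closed sum property, $\delta>0$ with $\|[g]\|_q\le\frac1\delta\|Sg\|_{L^2(\mu)}$ for all $g\in\overline H$, $\psi$ $(\sigma_R)_{R>0}$-strongly convex on bounded sets, and $\mathcal M\subset H$ uniformly bounded in summation around $c$ with radius $R$), for all $\tilde h,h\in\mathcal M$, $$F(\tilde h)-F(h)\ \ge\ -\frac{1}{2\delta^2\sigma_R}\,\|d\hat F([h],\cdot)\|_q^2 .$$
   Context: Let $(\mathcal X,\mu)$ be a finite measure space, $N\ge1$, $c\in L^\infty(\mu)$, $\psi:\mathbb R\to\mathbb R$ continuously differentiable. $\psi$ is $(\sigma_R)_{R>0}$-strongly convex on bounded sets if for each $R>0$, $\sigma_R>0$ and $\psi(\tilde s)\ge\psi(s)+\psi'(s)(\tilde s-s)+\frac{\sigma_R}{2}(\tilde s-s)^2$ for all $s,\tilde s\in(-R,R)$. Let $H_1,\dots,H_N$ be linear subspaces of $L^\infty(\mu)$, $H=H_1\times\dots\times H_N$, $Sh=\sum_i h_i$. $\mathcal M\subset H$ is uniformly bounded in summation around $c$ with radius $R$ if $\|Sh-c\|_{L^\infty(\mu)}<R$ for all $h\in\mathcal M$. $F(h)=\int(\psi(Sh-c)-Sh)\,d\mu$, $dF(h,r)=\int(\psi'(Sh-c)-1)Sr\,d\mu$. Let $\overline H_i$ be the $L^2(\mu)$-closure of $H_i$; closed sum property: $\{\sum_i g_i:g_i\in\overline H_i\}$ is closed in $L^2(\mu)$. $\overline H=\prod_i\overline H_i$ with $\|h\|_{\mathrm{sum}}=(\sum_i\|h_i\|^2_{L^2(\mu)})^{1/2}$,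 $\ker S=\{h\in\overline H:Sh=0\}$, $[h]=h+\ker S$, $\|[h]\|_q=\inf_{\tilde h\in[h]}\|\tilde h\|_{\mathrm{sum}}$, $\hat H_\infty=\{[h]:h\in H\}$, $d\hat F([h],[r])=dF(h,r)$, and $\|d\hat F([h],\cdot)\|_q=\sup\{|dF(h,r)|:r\in H,\|[r]\|_q\le1\}$. *)

(* Defs.v *)
From HB Require Import structures.
From mathcomp Require Import all_boot all_order all_algebra.
From mathcomp Require Import all_classical all_reals all_analysis.
Set Implicit Arguments. Unset Strict Implicit. Unset Printing Implicit Defensive.
Import Order.TTheory GRing.Theory Num.Theory.
Import numFieldNormedType.Exports.
Local Open Scope classical_set_scope.
Local Open Scope ring_scope.

Section Defs.
Context {d : measure_display} {X : measurableType d} {R : realType}.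
Variable mu : {measure set X -> \bar R}.

Definition Linf (f : X -> R) : Prop :=
  measurable_fun setT f /\ exists M : R, {ae mu, forall x, `|f x| <= M}.

Definition Linfnorm (f : X -> R) : \bar R := Lnorm mu +oo%E (EFin \o f).
Definition L2norm (f : X -> R) : R := fine (Lnorm mu 2%:E (EFin \o f)).

Definition is_subspace (A : set (X -> R)) : Prop :=
  A `<=` Linf /\ A (fun _ => 0) /\
  (forall (a : R) f g, A f -> A g -> A (fun x => a * f x + g x)).

Definition L2closure (A : set (X -> R)) (g : X -> R) : Prop :=
  measurable_fun setT g /\ (Lnorm mu 2%:E (EFin \o g) < +oo)%E /\
  exists u : nat -> X -> R, (forall n, A (u n)) /\
    (fun n => Lnorm mu 2%:E (EFin \o (u n \- g))) @ \oo --> 0%E.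

Variable N : nat.

Definition Ssum (h : 'I_N -> X -> R) : X -> R := fun x => \sum_(i < N) h i x.

Definition inH (Hs : 'I_N -> set (X -> R)) (h : 'I_N -> X -> R) : Prop :=
  forall i, Hs i (h i).

Definition inHbar (Hs : 'I_N -> set (X -> R)) (h : 'I_N -> X -> R) : Prop :=
  forall i, L2closure (Hs i) (h i).

(* closed sum property: {sum_i g_i : g_i in closure(H_i)} is closed in L^2(mu) *)
Definition closed_sum_property (Hs : 'I_N -> set (X -> R)) : Prop :=
  forall (f : X -> R) (u : nat -> X -> R),
    measurable_fun setT f -> (Lnorm mu 2%:E (EFin \o f) < +oo)%E ->
    (forall n, exists g, inHbar Hs g /\ {ae mu, forall x, u n x = Ssum g x}) ->
    (fun n => Lnorm mu 2%:E (EFin \o (u n \- f))) @ \oo --> 0%E ->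
    exists g, inHbar Hs g /\ {ae mu, forall x, f x = Ssum g x}.

Definition sumnorm (h : 'I_N -> X -> R) : R :=
  Num.sqrt (\sum_(i < N) (L2norm (h i)) ^+ 2).

(* ||[h]||_q = inf over htilde in h + ker S of ||htilde||_sum;
   htilde in h + ker S  <->  htilde in Hbar and S htilde = S h in L^2 (a.e.) *)
Definition qnorm (Hs : 'I_N -> set (X -> R)) (h : 'I_N -> X -> R) : R :=
  inf [set sumnorm ht | ht in
        [set ht | inHbar Hs ht /\ {ae mu, forall x, Ssum ht x = Ssum h x}]].

Definition Ffun (psi : R -> R) (c : X -> R) (h : 'I_N -> X -> R) : R :=
  Rintegral mu setT (fun x => psi (Ssum h x - c x) - Ssum h x).

Definition dF (psi : R -> R) (c : X -> R) (h r : 'I_N -> X -> R) : R :=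
  Rintegral mu setT (fun x => ((derive1 psi) (Ssum h x - c x) - 1) * Ssum r x).

Definition dFqnorm (Hs : 'I_N -> set (X -> R)) (psi : R -> R) (c : X -> R)
    (h : 'I_N -> X -> R) : \bar R :=
  ereal_sup [set (`|dF psi c h r|)%:E | r in [set r | inH Hs r /\ qnorm Hs r <= 1]].

Definition unif_bdd_sum (c : X -> R) (M : set ('I_N -> X -> R)) (Rad : R) : Prop :=
  forall h, M h -> (Linfnorm (fun x => (Ssum h x - c x)%R) < Rad%:E)%E.

End Defs.

Definition strongly_convex_bdd {R : realType} (psi : R -> R) (sigma : R -> R) : Prop :=
  forall Rad : R, 0 < Rad ->
    0 < sigma Rad /\
    forall s st : R, - Rad < s < Rad -> - Rad < st < Rad ->
      psi s + (derive1 psi) s * (st - s) + sigma Rad / 2 * (st - s) ^+ 2 <= psi st.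

(* Main.v *)
Require Import Defs.
From HB Require Import structures.
From mathcomp Require Import all_boot all_order all_algebra.
From mathcomp Require Import all_classical all_reals all_analysis.
From mathcomp Require Import measurable_realfun ess_sup_inf.
From mathcomp Require Import ring lra.
Import Order.TTheory GRing.Theory Num.Theory.
Import numFieldNormedType.Exports.
Local Open Scope classical_set_scope.
Local Open Scope ring_scope.
Section Aux.
Context {d : measure_display} {X : measurableType d} {R : realType}.
Context {mu : {finite_measure set X -> \bar R}}.
Implicit Types (f g : X -> R).

Lemma Linf_bnd {f} : Linf mu f -> exists M, 0 <= M /\ {ae mu, forall x, `|f x| <= M}.
Proof.
move=> [_ [M HM]]; exists `|M|; split => //.
by apply: filterS HM => x /le_trans; apply; exact: ler_norm.
Qed.

Lemma Linf_cst k : Linf mu (fun _ => k).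
Proof. by split; [exact: measurable_cst| exists `|k|; exact: aeW]. Qed.

Lemma LinfD {f g} : Linf mu f -> Linf mu g -> Linf mu (fun x => f x + g x).
Proof.
move=> [mf Hf] [mg Hg]; split; first exact: measurable_funD.
have [M1 [_ H1]] := Linf_bnd (conj mf Hf).
have [M2 [_ H2]] := Linf_bnd (conj mg Hg).
exists (M1 + M2); apply: filterS2 H1 H2 => x h1 h2.
by rewrite (le_trans (ler_normD _ _))// lerD.
Qed.

Lemma LinfB {f g} : Linf mu f -> Linf mu g -> Linf mu (fun x => f x - g x).
Proof.
move=> [mf Hf] [mg Hg]; split; first exact: measurable_funB.
have [M1 [_ H1]] := Linf_bnd (conj mf Hf).
have [M2 [_ H2]] := Linf_bnd (conj mg Hg).
exists (M1 + M2); apply: filterS2 H1 H2 => x h1 h2.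
by rewrite (le_trans (ler_normB _ _))// lerD.
Qed.

Lemma LinfM {f g} : Linf mu f -> Linf mu g -> Linf mu (fun x => f x * g x).
Proof.
move=> [mf Hf] [mg Hg]; split; first exact: measurable_funM.
have [M1 [M10 H1]] := Linf_bnd (conj mf Hf).
have [M2 [M20 H2]] := Linf_bnd (conj mg Hg).
exists (M1 * M2); apply: filterS2 H1 H2 => x h1 h2.
by rewrite normrM ler_pM.
Qed.

Lemma Linf_sum (I : Type) (s : seq I) (F : I -> X -> R) :
  (forall i, Linf mu (F i)) -> Linf mu (fun x => \sum_(i <- s) F i x).
Proof.
move=> HF; elim: s => [|a s IH].
  under eq_fun do rewrite big_nil; exact: Linf_cst.
under eq_fun do rewrite big_cons; exact: LinfD.
Qed.

Lemma Linf_Ssum {N} {F : 'I_N -> X -> R} : (forall i, Linf mu (F i)) -> Linf mu (Ssum F).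
Proof. move=> HF; have := @Linf_sum _ (index_enum (ordinal N)) F HF; by []. Qed.

Lemma Linf_int {f} : Linf mu f -> mu.-integrable setT (EFin \o f).
Proof.
move=> Hf; have [M [M0 HM]] := Linf_bnd Hf.
case: Hf => mf _; apply/integrableP; split; first exact/measurable_EFinP.
apply: (le_lt_trans (integral_le_bound M%:E _ _ _ _)) => //.
- exact/measurable_EFinP.
- by apply: filterS HM => x hx _ /=; rewrite lee_fin.
- by rewrite lte_mul_pinfty// ?lee_fin// fin_num_fun_lty//; exact: fin_num_measure.
Qed.


Lemma Linf_comp {phi : R -> R} {f m} : continuous phi -> measurable_fun setT f ->
  {ae mu, forall x, `|f x| <= m} -> Linf mu (fun x => phi (f x)).
Proof.
move=> cphi mf Hm; split.
  exact: (measurableT_comp (continuous_measurable_fun cphi) mf).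
set m' := Num.max m 0.
have hm0 : 0 <= m' by rewrite le_max lexx orbT.
have hm' : - m' <= m' by rewrite (le_trans _ hm0)// oppr_le0.
have cn : {within `[- m', m'], continuous (fun y => `|phi y|)}.
  apply: continuous_subspaceT => y; apply: continuous_comp; first exact: cphi.
  exact: norm_continuous.
have [c0 _ Hc0] := EVT_max hm' cn.
exists `|phi c0|; apply: filterS Hm => x hx; apply: Hc0.
rewrite in_itv /= -ler_norml (le_trans hx)// le_max lexx//.
Qed.

Lemma ae_le_Rint f g : mu.-integrable setT (EFin \o f) -> mu.-integrable setT (EFin \o g) ->
  {ae mu, forall x, f x <= g x} ->
  Rintegral mu setT f <= Rintegral mu setT g.
Proof.
move=> fi gi Hfg; rewrite -subr_ge0 -RintegralB//.
rewrite /Rintegral fine_ge0//.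
have mgf : measurable_fun setT (fun x => (g x - f x)%:E).
  apply/measurable_EFinP; apply: measurable_funB.
  - exact/measurable_EFinP/(measurable_int _ gi).
  - exact/measurable_EFinP/(measurable_int _ fi).
rewrite (ae_eq_integral (fun x => (`|g x - f x|)%:E))//.
- by apply: integral_ge0 => x _; rewrite lee_fin.
- apply/measurable_EFinP; apply: measurableT_comp => //; exact/measurable_EFinP.
- by apply: filterS Hfg => x hx _; rewrite ger0_norm// subr_ge0.
Qed.


Lemma L2norm_sq f : L2norm mu f ^+ 2 = Rintegral mu setT (fun x => f x ^+ 2).
Proof.
rewrite /L2norm /Rintegral.
have h0 := Lnorm_ge0 mu 2%:E (EFin \o f).
rewrite -powR_mulrn ?fine_ge0// -fine_poweR powR_Lnorm ?pnatr_eq0//.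
congr fine; apply: eq_integral => x _ /=.
by rewrite powR_mulrn// real_normK// num_real.
Qed.


Lemma Lnorm2_fin f : Linf mu f -> (Lnorm mu 2%:E (EFin \o f) < +oo)%E.
Proof.
move=> Hf; apply: (@lty_poweRy _ _ 2); first by rewrite pnatr_eq0.
rewrite powR_Lnorm ?pnatr_eq0//.
have := Linf_int (LinfM Hf Hf); case/integrableP => _; apply: le_lt_trans.
rewrite le_eqVlt; apply/orP; left; apply/eqP; apply: eq_integral => x _ /=.
by rewrite powR_mulrn// real_normK ?num_real// -expr2 ger0_norm// sqr_ge0.
Qed.

Lemma L2norm_ge0 f : 0 <= L2norm mu f.
Proof. by rewrite /L2norm fine_ge0// Lnorm_ge0. Qed.

Lemma L2norm_scale f a : Linf mu f -> L2norm mu (fun x => a * f x) = `|a| * L2norm mu f.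
Proof.
move=> Hf; apply/eqP; rewrite -(@eqrXn2 _ 2)// ?mulr_ge0// ?L2norm_ge0//.
rewrite exprMn !L2norm_sq real_normK ?num_real// -RintegralZl//.
  by apply/eqP; apply: eq_Rintegral => x _; rewrite exprMn.
exact: Linf_int (LinfM Hf Hf).
Qed.

Lemma Linf_L2closure {A : set (X -> R)} {f} : A `<=` Linf mu -> A f -> L2closure mu A f.
Proof.
move=> AL Af; have Hf := AL _ Af; split; first by case: Hf.
split; first exact: Lnorm2_fin.
exists (fun _ => f); split => //.
rewrite (_ : (fun n => _) = fun _ => 0%E); first exact: cvg_cst.
apply/funext => n; rewrite (@eq_Lnorm _ _ _ _ _ _ (cst 0%E)) ?Lnorm0//.
by move=> x /=; rewrite subrr.
Qed.

Lemma Linf_bound {f} {Rad : R} : 0 < Rad -> (Linfnorm mu f < Rad%:E)%E ->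
  exists m, m < Rad /\ {ae mu, forall x, `|f x| <= m}.
Proof.
move=> HR; rewrite /Linfnorm unlock /=; case: ifPn => mu0; last first.
  move=> _; exists 0; split => //; apply: measure0_ae.
  by apply/eqP; rewrite eq_le measure_ge0 andbT leNgt.
have Hge := ess_sup_ge mu (abse \o (EFin \o f)).
move: Hge; case E: (ess_sup mu (abse \o (EFin \o f))) => [r| |] Hge.
- move=> Hr; exists r; split; first by rewrite -lte_fin.
  by apply: filterS Hge => x /=; rewrite lee_fin.
- by rewrite ltNge leey.
- move=> _; exists 0; split => //; apply: filterS Hge => x /=.
  by rewrite leeNy_eq.
Qed.

End Aux.

Theorem mainTheorem6 (d : measure_display) (X : measurableType d) (R : realType)
  (mu : {finite_measure set X -> \bar R}) (N : nat) (HN : (0 < N)%N)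
  (c : X -> R) (Hc : Linf mu c)
  (psi : R -> R) (Hpsi_d : forall x : R, derivable psi x 1)
  (Hpsi_c : continuous ((derive1 psi)))
  (Hs : 'I_N -> set (X -> R)) (HHs : forall i, is_subspace mu (Hs i))
  (Hcsp : closed_sum_property mu Hs)
  (delta : R) (Hdelta : 0 < delta)
  (Hdelta_ineq : forall g : 'I_N -> X -> R, inHbar mu Hs g ->
      qnorm mu Hs g <= delta^-1 * L2norm mu (Ssum g))
  (sigma : R -> R) (Hconv : strongly_convex_bdd psi sigma)
  (M : set ('I_N -> X -> R)) (HMH : M `<=` inH Hs)
  (Rad : R) (HRad : 0 < Rad) (HM : unif_bdd_sum mu c M Rad) :
  forall ht h : 'I_N -> X -> R, M ht -> M h ->
    (- ((2 * delta ^+ 2 * sigma Rad)^-1)%:E * (dFqnorm mu Hs psi c h * dFqnorm mu Hs psi c h)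
      <= (Ffun mu psi c ht - Ffun mu psi c h)%:E)%E.
Proof.
move=> ht h Mht Mh.
have Hsig : 0 < sigma Rad := (Hconv Rad HRad).1.
have HHt := HMH _ Mht; have HHh := HMH _ Mh.
have HL i : Hs i `<=` Linf mu := (HHs i).1.
have Hz i : Hs i (fun _ => 0) := (HHs i).2.1.
have Hcl i := (HHs i).2.2.
have Lh : Linf mu (Ssum h) := Linf_Ssum (fun i => HL i _ (HHh i)).
have Lht : Linf mu (Ssum ht) := Linf_Ssum (fun i => HL i _ (HHt i)).
pose r := fun i x => -1 * h i x + ht i x.
have Hr i : Hs i (r i) := Hcl i (-1) _ _ (HHh i) (HHt i).
have Lr : Linf mu (Ssum r) := Linf_Ssum (fun i => HL i _ (Hr i)).
have Sr x : Ssum r x = Ssum ht x - Ssum h x.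
  rewrite /Ssum /r big_split /= -mulr_sumr; lra.
have cont_psi : continuous psi.
  by move=> x; apply: differentiable_continuous; apply/derivable1_diffP; exact: Hpsi_d.
have [m1 [m1R Hm1]] := Linf_bound HRad (HM _ Mh).
have [m2 [m2R Hm2]] := Linf_bound HRad (HM _ Mht).
have LA := LinfB Lh Hc.
have LB := LinfB Lht Hc.
have LpA := Linf_comp cont_psi LA.1 Hm1.
have LpB := Linf_comp cont_psi LB.1 Hm2.
have LdA := Linf_comp Hpsi_c LA.1 Hm1.
have Lg := LinfB LdA (Linf_cst 1).
have LF1 := LinfB LpB Lht.
have LF0 := LinfB LpA Lh.
have Ldf := LinfM Lg Lr.
have Lsq := LinfM Lr Lr.
set L := L2norm mu (Ssum r).
have L0 : 0 <= L by exact: L2norm_ge0.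
have step1 : Ffun mu psi c ht - Ffun mu psi c h >= dF mu psi c h r + sigma Rad / 2 * L ^+ 2.
  have I1 := Linf_int LF1; have I0 := Linf_int LF0; have Isq := Linf_int Lsq.
  have Idf := Linf_int Ldf; have Isq' := Linf_int (LinfM (Linf_cst (sigma Rad / 2)) Lsq).
  rewrite /Ffun -RintegralB//.
  rewrite /L L2norm_sq /dF -RintegralZl//.
  rewrite -RintegralD//.
  apply: ae_le_Rint.
  - exact: Linf_int (LinfD Ldf (LinfM (Linf_cst _) Lsq)).
  - exact: Linf_int (LinfB LF1 LF0).
  apply: filterS2 Hm1 Hm2 => x h1 h2.
  have Ha : - Rad < Ssum h x - c x < Rad by rewrite -ltr_norml (le_lt_trans h1).
  have Hb : - Rad < Ssum ht x - c x < Rad by rewrite -ltr_norml (le_lt_trans h2).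
  have := (Hconv Rad HRad).2 _ _ Ha Hb.
  rewrite Sr.
  have -> : Ssum ht x - c x - (Ssum h x - c x) = Ssum ht x - Ssum h x by lra.
  rewrite /= expr2; nra.
have key : forall dd, dFqnorm mu Hs psi c h = dd%:E -> - (dd * L / delta) <= dF mu psi c h r.
  move=> dd HD.
  have key2 e : 0 < e -> 0 <= dd /\ - (dd * (L / delta + e)) <= dF mu psi c h r.
    move=> e0; set t := L / delta + e.
    have t0 : 0 < t by rewrite /t ltr_wpDl// divr_ge0// ltW.
    pose r' := fun i x => t^-1 * r i x + 0.
    have Hr' i : Hs i (r' i) := Hcl i t^-1 _ _ (Hr i) (Hz i).
    have Sr' : Ssum r' = (fun x => t^-1 * Ssum r x).
      apply/funext => x; rewrite /Ssum /r' mulr_sumr; apply: eq_bigr => i _.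
      by rewrite addr0.
    have qn : qnorm mu Hs r' <= 1.
      apply: (le_trans (Hdelta_ineq _ (fun i => Linf_L2closure (HL i) (Hr' i)))).
      rewrite Sr' L2norm_scale// ger0_norm -/L; last by rewrite invr_ge0 ltW.
      have -> : delta^-1 * (t^-1 * L) = L / (delta * t).
        by field; apply/andP; split; rewrite gt_eqF.
      rewrite ler_pdivrMr ?mulr_gt0// mul1r /t mulrDr mulrCA mulfV ?gt_eqF// mulr1.
      by rewrite lerDl mulr_ge0// ltW.
    have Hsup : ((`|dF mu psi c h r'|)%:E <= dFqnorm mu Hs psi c h)%E.
      by apply: ereal_sup_ubound; exists r'.
    rewrite HD lee_fin in Hsup.
    have dFr' : dF mu psi c h r' = t^-1 * dF mu psi c h r.
      rewrite /dF Sr' -RintegralZl//; last exact: Linf_int Ldf.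
      by apply: eq_Rintegral => x _; rewrite mulrCA.
    move: Hsup; rewrite dFr' normrM ger0_norm; last by rewrite invr_ge0 ltW.
    rewrite mulrC.
    rewrite ler_pdivrMr// => Hsup.
    have dd0 : 0 <= dd * t by exact: le_trans Hsup.
    split; first by rewrite -(pmulr_lge0 _ t0).
    by move: Hsup; rewrite ler_norml => /andP[].
  apply/ler_addgt0Pr => eps eps0.
  have w0 : 0 < 1 + dd.
    by have [dd0 _] := key2 _ ltr01; rewrite ltr_pwDl.
  set w := eps / (1 + dd).
  have [dd0 K] := key2 w (divr_gt0 eps0 w0).
  have ew : eps = dd * w + w by rewrite /w; field; rewrite gt_eqF.
  have w0' : 0 <= w by rewrite /w divr_ge0// ltW.
  rewrite ew; move: K; rewrite mulrDr; lra.
set D := dFqnorm mu Hs psi c h.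
case HD : D => [dd| |].
- have kk := key dd HD.
  rewrite (_ : (- ((2 * delta ^+ 2 * sigma Rad)^-1)%:E * (dd%:E * dd%:E))%E =
     (- (2 * delta ^+ 2 * sigma Rad)^-1 * (dd * dd))%:E); last by rewrite EFinM EFinN EFinM.
  rewrite lee_fin.
  have sq : 0 <= (sigma Rad * L - dd / delta) ^+ 2 / (2 * sigma Rad).
    by rewrite divr_ge0 ?sqr_ge0// mulr_ge0// ltW.
  have id : (sigma Rad * L - dd / delta) ^+ 2 / (2 * sigma Rad) =
      - (dd * L / delta) + sigma Rad / 2 * L ^+ 2 + (2 * delta ^+ 2 * sigma Rad)^-1 * (dd * dd).
    by field; apply/andP; split; rewrite gt_eqF.
  lra.
- rewrite mulyy muleC lt0_mulye ?leNye//.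
  rewrite (_ : (- ((2 * delta ^+ 2 * sigma Rad)^-1)%:E)%E = (- (2 * delta ^+ 2 * sigma Rad)^-1)%:E); last by rewrite EFinN.
  rewrite lte_fin oppr_lt0 invr_gt0.
  by rewrite mulr_gt0// mulr_gt0// exprn_gt0.
- rewrite mulNyNy muleC lt0_mulye ?leNye//.
  rewrite (_ : (- ((2 * delta ^+ 2 * sigma Rad)^-1)%:E)%E = (- (2 * delta ^+ 2 * sigma Rad)^-1)%:E); last by rewrite EFinN.
  rewrite lte_fin oppr_lt0 invr_gt0.
  by rewrite mulr_gt0// mulr_gt0// exprn_gt0.
Qed.
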